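(* Let $\Phi$ be a Leonard system in $\mathcal A$ with eigenvalue sequence $\theta_0,\dots,\theta_d$, and let $\nu$ and $c_1,\dots,c_d$ be as defined below. Then $$(\theta_0-\theta_1)(\theta_0-\theta_2)\cdots(\theta_0-\theta_d)=\nu\,c_1c_2\cdots c_d.$$
   Context: Let $\mathbb K$ be a field, $d\ge 0$ an integer, and $\mathcal A$ a $\mathbb K$-algebra isomorphic to $\mathrm{Mat}_{d+1}(\mathbb K)$, with identity $I$ and trace $\mathrm{tr}$. An element $A\in\mathcal A$ is multiplicity-free if it has $d+1$ mutually distinct eigenvalues in $\mathbb K$; if $\theta_0,\dots,\theta_d$ is an ordering of them, the primitive idempotent of $A$ associated with $\theta_i$ is $E_i=\prod_{j\ne i}(A-\theta_jI)/(\theta_i-\theta_j)$. A Leonard system in $\mathcal A$ is a sequence $\Phi=(A;A^*;\{E_i\}_{i=0}^d;\{E^*_i\}_{i=0}^d)$ such that: (i) $A,A^*$ are multiplicity-free; (ii) $E_0,\dots,E_d$ is an ordering of the primitive idempotents of $A$; (iii) $E^*_0,\dots,E^*_d$ is an ordering of those of $A^*$; (iv) $E_iA^*E_j=0$ if $|i-j|>1$ and $\ne0$ if $|i-j|=1$ $(0\le i,j\le d)$; (v) $E^*_iAE^*_j=0$ if $|i-j|>1$ and $\neq0$ if $|i-j|=1$ $(0\le i,j\le d)$. $\theta_i$ denotes the eigenvalue of $A$ associated with $E_i$ (eigenvalue sequence). One has $\mathrm{tr}(E_0E^*_0)\ne0$, and $\nu$ is defined by $\nu=\mathrm{tr}(E_0E^*_0)^{-1}$.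 Let $V$ be an irreducible $\mathcal A$-module and $u$ a nonzero vector in $E_0V$; then $E^*_0u,\dots,E^*_du$ is a basis of $V$ (a $\Phi$-standard basis). The matrix representing $A$ with respect to this basis is tridiagonal and does not depend on the choice of $V$ and $u$; for $1\le i\le d$, $c_i$ denotes its $(i,i-1)$ entry (rows and columns indexed $0,\dots,d$). *)

(* Defs.v *)
From HB Require Import structures.
From mathcomp Require Import all_boot all_order all_algebra.
Set Implicit Arguments. Unset Strict Implicit. Unset Printing Implicit Defensive.
Import Order.TTheory GRing.Theory Num.Theory.
Local Open Scope ring_scope.

(* The algebra \mathcal A is taken to be 'M[K]_(d.+1) itself. *)

Definition mult_free (K : fieldType) (d : nat) (A : 'M[K]_d.+1) : Prop :=
  exists th : 'I_d.+1 -> K, injective th /\ forall i, eigenvalue A (th i).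

Definition prim_idem (K : fieldType) (d : nat) (A : 'M[K]_d.+1)
    (th : 'I_d.+1 -> K) (i : 'I_d.+1) : 'M[K]_d.+1 :=
  \prod_(j < d.+1 | j != i) ((th i - th j)^-1 *: (A - (th j)%:M)).

Definition eigen_seq_for (K : fieldType) (d : nat) (A : 'M[K]_d.+1)
    (E : 'I_d.+1 -> 'M[K]_d.+1) (th : 'I_d.+1 -> K) : Prop :=
  [/\ injective th, (forall i, eigenvalue A (th i))
    & forall i, E i = prim_idem A th i].

Definition idem_ordering (K : fieldType) (d : nat) (A : 'M[K]_d.+1)
    (E : 'I_d.+1 -> 'M[K]_d.+1) : Prop :=
  exists th, eigen_seq_for A E th.

Definition tridiag_cond (K : fieldType) (d : nat)
    (E : 'I_d.+1 -> 'M[K]_d.+1) (B : 'M[K]_d.+1) : Prop :=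
  forall i j : 'I_d.+1,
    ((i.+1 < j)%N \/ (j.+1 < i)%N -> E i *m B *m E j = 0) /\
    ((i.+1 == j) || (j.+1 == i) -> E i *m B *m E j != 0).

Definition leonard_system (K : fieldType) (d : nat) (A As : 'M[K]_d.+1)
    (E Es : 'I_d.+1 -> 'M[K]_d.+1) : Prop :=
  [/\ mult_free A /\ mult_free As, idem_ordering A E, idem_ordering As Es,
      tridiag_cond E As & tridiag_cond Es A].

Definition ls_nu (K : fieldType) (d : nat) (E Es : 'I_d.+1 -> 'M[K]_d.+1) : K :=
  (\tr (E ord0 *m Es ord0))^-1.

(* The matrix whose j-th column is E*_j u (the Phi-standard basis vectors,
   with V = K^(d+1) as column vectors, A acting by left multiplication). *)
Definition std_basis_mx (K : fieldType) (d : nat) (Es : 'I_d.+1 -> 'M[K]_d.+1)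
    (u : 'cV[K]_d.+1) : 'M[K]_d.+1 :=
  \matrix_(i, j) (Es j *m u) i ord0.

(* Main.v *)
Require Import Defs.
From HB Require Import structures.
From mathcomp Require Import all_boot all_order all_algebra zify.
Import Order.TTheory GRing.Theory Num.Theory.
Local Open Scope ring_scope.

Lemma rank1_decomp (K : fieldType) n (E : 'M[K]_n) : \rank E = 1%N ->
  exists c : 'M[K]_(n,1), exists r : 'M[K]_(1,n), E = c *m r.
Proof.
move=> h; have := mulmx_base E.
generalize (col_base E) (row_base E); rewrite h => c r <-.
by exists c, r.
Qed.

Lemma rank1_mul_neq0 (K : fieldType) n p (E : 'M[K]_n) (M : 'M[K]_(p,n)) (v : 'cV[K]_n) :
  \rank E = 1%N -> M *m E != 0 -> E *m v != 0 -> M *m E *m v != 0.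
Proof.
case/rank1_decomp=> c [r ->].
have -> : M *m (c *m r) *m v = (r *m v) 0 0 *: (M *m c).
  by rewrite -!mulmxA {1}[r *m v]mx11_scalar mul_mx_scalar scalemxAr.
rewrite scaler_eq0 negb_or => Mcr crv; apply/andP; split.
  apply: contraNneq crv => h0.
  by rewrite -mulmxA [r *m v]mx11_scalar h0 mul_mx_scalar scale0r.
by apply: contraNneq Mcr; rewrite mulmxA => ->; rewrite mul0mx.
Qed.

Lemma rank1_sandwich (K : fieldType) n (E X : 'M[K]_n) :
  \rank E = 1%N -> E *m X *m E = \tr (E *m X) *: E.
Proof.
case/rank1_decomp=> c [r ->].
have -> : c *m r *m X *m (c *m r) = c *m ((r *m (X *m c)) *m r) by rewrite !mulmxA.
have -> : \tr (c *m r *m X) = \tr (r *m (X *m c)) by rewrite -mulmxA mxtrace_mulC mulmxA.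
rewrite {1}[r *m (X *m c)]mx11_scalar mul_scalar_mx scalemxAr; congr (_ *m (_ *: _)).
by rewrite /mxtrace big_ord1.
Qed.

Lemma eigenspace_rank1 (K : fieldType) d (A : 'M[K]_d.+1) (th : 'I_d.+1 -> K) :
  injective th -> (forall i, eigenvalue A (th i)) ->
  forall i, \rank (eigenspace A (th i)) = 1%N.
Proof.
move=> thinj eig.
have dx := @mxdirect_sum_eigenspace K 'I_d.+1 _ A predT th (in2W thinj).
move: dx; rewrite mxdirectE /= => /eqP hr.
have hle : (\sum_i \rank (eigenspace A (th i)) <= d.+1)%N.
  by rewrite -hr rank_leq_col.
have hge : forall i, (0 < \rank (eigenspace A (th i)))%N.
  by move=> i; rewrite lt0n mxrank_eq0; apply: eig.
move=> i; apply/eqP; rewrite eqn_leq hge andbT.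
move: hle; rewrite (bigD1 i) //=.
have : (\sum_(j | j != i) 1 <= \sum_(j | j != i) \rank (eigenspace A (th j)))%N.
  by apply: leq_sum => j _; apply: hge.
rewrite sum1_card cardC1 card_ord /=.
lia.
Qed.

Definition Lag {K : fieldType} {d : nat} (th : 'I_d.+1 -> K) (i : 'I_d.+1) : {poly K} :=
  \prod_(j | j != i) ((th i - th j)^-1 *: ('X - (th j)%:P)).

Lemma Lag_horner (K : fieldType) d (th : 'I_d.+1 -> K) i k :
  injective th -> (Lag th i).[th k] = (i == k)%:R.
Proof.
move=> thinj; rewrite /Lag horner_prod.
case: eqVneq => [<-|nik].
  apply: big1 => j nji; rewrite hornerZ hornerXsubC mulVf //.
  by rewrite subr_eq0 (inj_eq thinj) eq_sym.
rewrite (bigD1 k) 1?eq_sym //= hornerZ hornerXsubC subrr mulr0 mul0r //.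
Qed.

Lemma prim_idem_horner (K : fieldType) d (A : 'M[K]_d.+1) th i :
  prim_idem A th i = horner_mx A (Lag th i).
Proof.
rewrite /prim_idem /Lag rmorph_prod; apply: eq_bigr => j _.
by rewrite -mul_polyC rmorphM /= horner_mx_C [_ * _]mul_scalar_mx rmorphB /= horner_mx_X horner_mx_C.
Qed.

Lemma char_poly_prod (K : fieldType) d (A : 'M[K]_d.+1) (th : 'I_d.+1 -> K) :
  injective th -> (forall i, eigenvalue A (th i)) ->
  char_poly A = \prod_(z <- map th (enum 'I_d.+1)) ('X - z%:P).
Proof.
move=> thinj eig.
rewrite {1}(@all_roots_prod_XsubC _ (char_poly A) (map th (enum 'I_d.+1))).
- by rewrite (monicP (char_poly_monic A)) scale1r.
- by rewrite size_char_poly size_map size_enum_ord.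
- by apply/allP => z /mapP [i _ ->]; rewrite -eigenvalue_root_char.
- by rewrite uniq_rootsE map_inj_uniq ?enum_uniq.
Qed.

Lemma vanish (K : fieldType) d (A : 'M[K]_d.+1) (th : 'I_d.+1 -> K) (q : {poly K}) :
  injective th -> (forall i, eigenvalue A (th i)) ->
  (forall k, q.[th k] = 0) -> horner_mx A q = 0.
Proof.
move=> thinj eig hq.
have hall : all (root q) (map th (enum 'I_d.+1)).
  by apply/allP => z /mapP [i _ ->]; apply/rootP.
have hu : uniq_roots (map th (enum 'I_d.+1)).
  by rewrite uniq_rootsE map_inj_uniq ?enum_uniq.
have [r ->] := uniq_roots_prod_XsubC hall hu.
by rewrite rmorphM /= -(@char_poly_prod _ _ A th thinj eig) Cayley_Hamilton mulr0.
Qed.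

Lemma vec_horner (K : fieldType) n (A : 'M[K]_n.+1) (v : 'rV[K]_n.+1) a (p : {poly K}) :
  v *m A = a *: v -> v *m horner_mx A p = p.[a] *: v.
Proof.
move=> hv; elim/poly_ind: p => [|p c IH].
  by rewrite rmorph0 mulmx0 horner0 scale0r.
rewrite rmorphD rmorphM /= horner_mx_X horner_mx_C mulmxDr mulmxA IH.
rewrite -scalemxAl hv scalerA mul_mx_scalar hornerMXaddC scalerDl //.
Qed.

Definition idem_sys {K : fieldType} {d : nat} (A : 'M[K]_d.+1) (th : 'I_d.+1 -> K)
    (E : 'I_d.+1 -> 'M[K]_d.+1) : Prop :=
  [/\ (forall i j, i != j -> E i *m E j = 0),
      (forall i, E i *m E i = E i),
      (\sum_i E i = 1%:M),
      (forall i, A *m E i = th i *: E i) &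
      ((forall i, E i *m A = th i *: E i) /\
      (forall i, \rank (E i) = 1%N))].

Lemma eigen_idem (K : fieldType) d (A : 'M[K]_d.+1) E th :
  eigen_seq_for A E th -> idem_sys A th E.
Proof.
case=> thinj eig hE.
have hE' : forall i, E i = horner_mx A (Lag th i).
  by move=> i; rewrite hE prim_idem_horner.
have van := @vanish K d A th _ thinj eig.
have AE : forall i, A *m E i = th i *: E i.
  move=> i; apply/eqP; rewrite -subr_eq0.
  have := van (('X - (th i)%:P) * Lag th i).
  rewrite rmorphM rmorphB /= horner_mx_X horner_mx_C -mulmxE mulmxBl mul_scalar_mx -hE' => -> //.
  move=> k; rewrite hornerM hornerXsubC Lag_horner //.
  by case: eqVneq => [->|]; rewrite ?subrr ?mul0r ?mulr0.
have EA : forall i, E i *m A = th i *: E i.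
  move=> i; apply/eqP; rewrite -subr_eq0.
  have := van (Lag th i * ('X - (th i)%:P)).
  rewrite rmorphM rmorphB /= horner_mx_X horner_mx_C -mulmxE mulmxBr mul_mx_scalar -hE' => -> //.
  move=> k; rewrite hornerM hornerXsubC Lag_horner //.
  by case: eqVneq => [->|]; rewrite ?subrr ?mul0r ?mulr0.
split => //.
- move=> i j nij; rewrite !hE' mulmxE -rmorphM; apply: van => k.
  rewrite hornerM !Lag_horner // -natrM.
  by case: eqVneq => [<-|] //; rewrite eq_sym (negbTE nij).
- move=> i; apply/eqP; rewrite -subr_eq0 !hE' mulmxE -rmorphM -rmorphB; apply/eqP/van => k.
  by rewrite hornerD hornerN hornerM !Lag_horner //; case: (i == k); rewrite ?mulr1 ?mulr0 subrr.
- apply/eqP; rewrite -subr_eq0.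
  have -> : \sum_i E i - 1%:M = horner_mx A (\sum_i Lag th i - 1).
    rewrite rmorphB rmorph_sum /=; congr (_ - _); [by apply: eq_bigr => i _; rewrite hE' | by rewrite -(horner_mx_C A)].
  apply/eqP; apply: van => k; rewrite hornerD hornerN horner_sum hornerC (bigD1 k) //= Lag_horner // eqxx.
  rewrite big1 ?addr0 ?subrr // => j njk; by rewrite Lag_horner // (negbTE njk).
split => //.
- move=> i; apply/eqP; rewrite eqn_leq; apply/andP; split.
    rewrite -(@eigenspace_rank1 _ _ A th thinj eig i); apply: mxrankS.
    by apply/eigenspaceP; apply: EA.
  rewrite lt0n mxrank_eq0; have /eigenvalueP [v hv vnz] := eig i.
  apply: contraNneq vnz => E0.
  have := @vec_horner _ _ A v (th i) (Lag th i) hv; rewrite -hE' E0 mulmx0 Lag_horner // eqxx scale1r.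
  by move=> <-.
Qed.


Lemma std_nonzero (K : fieldType) d (A As : 'M[K]_d.+1) E Es th ths (u : 'cV[K]_d.+1) :
  idem_sys A th E -> idem_sys As ths Es -> tridiag_cond E As ->
  E ord0 *m u = u -> u != 0 -> forall j, Es j *m u != 0.
Proof.
move=> [Eorth Eidem Esum _ [_ Erank]] [_ _ _ _ [EsA Esrank]] tri E0u unz j.
pose w k := As ^+ k *m u.
have wS : forall k, w k.+1 = As *m w k.
  by move=> k; rewrite /w exprS -mulmxE mulmxA.
have expand : forall p (M : 'M[K]_(p, d.+1)) (x : 'cV[K]_d.+1),
    M *m x = \sum_l M *m E l *m x.
  move=> p M x; rewrite -{1}[x]mul1mx -Esum mulmx_suml mulmx_sumr.
  by apply: eq_bigr => l _; rewrite mulmxA.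
have inordv : forall (m : 'I_d.+1), inord m = m by move=> m; apply: val_inj; rewrite /= inordK.
have P : forall k, (k < d.+1)%N ->
    (forall m : 'I_d.+1, (k < m)%N -> E m *m w k = 0) /\ E (inord k) *m w k != 0.
  elim=> [_|k IH hk].
    have -> : (inord 0 : 'I_d.+1) = ord0 by apply: val_inj; rewrite /= inordK.
    rewrite /w expr0 mul1mx E0u; split => // m hm.
    rewrite -E0u mulmxA Eorth ?mul0mx //.
    by apply: contraTneq hm => ->.
  have [IH1 IH2] := IH (ltnW hk).
  have zterm : forall m l : 'I_d.+1, (l.+1 < m)%N || (k < l)%N ->
      E m *m As *m E l *m w k = 0.
    move=> m l /orP [hlm|hkl].
      by have [h _] := tri m l; rewrite h ?mul0mx //; right.
    by rewrite -mulmxA IH1 ?mulmx0.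
  split.
    move=> m hm; rewrite wS mulmxA expand big1 // => l _; apply: zterm.
    by case: (ltnP k l) => hkl; rewrite ?orbT // orbF; apply: leq_ltn_trans hm.
  rewrite wS mulmxA expand (bigD1 (inord k)) //= big1 ?addr0.
    apply: rank1_mul_neq0 => //.
    have [_ h] := tri (inord k.+1) (inord k); apply: h.
    by rewrite !inordK ?eqxx ?orbT // ltnW.
  move=> l hl; apply: zterm; case: (ltnP k l) => hkl; rewrite ?orbT // orbF.
  rewrite inordK //; rewrite ltnS ltn_neqAle hkl andbT.
  by apply: contra hl => /eqP hlk; apply/eqP/val_inj; rewrite /= inordK // -hlk.
apply/negP => /eqP Esu0.
have EsX : forall k, Es j *m As ^+ k = ths j ^+ k *: Es j.
  elim=> [|k IH]; first by rewrite expr0 mulmx1 expr0 scale1r.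
  by rewrite exprSr -mulmxE mulmxA IH -scalemxAl EsA scalerA exprSr.
have hEsw : forall k, Es j *m w k = 0.
  by move=> k; rewrite /w mulmxA EsX -scalemxAl Esu0 scaler0.
have Q : forall k (m : 'I_d.+1), (m < k)%N -> Es j *m E m = 0.
  elim=> [//|k IH] m; rewrite ltnS leq_eqVlt => /orP [/eqP hmk|]; last exact: IH.
  have hk : (k < d.+1)%N by rewrite -hmk ltn_ord.
  have [P1 P2] := P k hk.
  have mk : inord k = m by rewrite -hmk inordv.
  have : Es j *m E m *m w k = 0.
    rewrite -(hEsw k) (expand _ (Es j) (w k)) (bigD1 m) //= big1 ?addr0 // => l hl.
    case: (ltnP k l) => hkl; first by rewrite -mulmxA P1 ?mulmx0.
    rewrite IH ?mul0mx // ltn_neqAle hkl andbT -hmk.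
    by apply: contra hl => /eqP h; apply/eqP/val_inj.
  move=> h; apply/eqP; apply/negPn/negP => hne.
  by have := @rank1_mul_neq0 _ _ _ _ _ (w k) (Erank m) hne (eq_ind _ (fun z => E z *m w k != 0) P2 _ mk); rewrite h eqxx.
have : Es j = 0.
  rewrite -[Es j]mulmx1 -Esum mulmx_sumr big1 // => m _; apply: (Q d.+1).
  exact: ltn_ord.
by apply/eqP; rewrite -mxrank_eq0 Esrank.
Qed.


Arguments eigen_idem {K d A E th}.
Arguments std_nonzero {K d A As E Es th ths u}.
Arguments rank1_sandwich {K n E X}.
Arguments rank1_mul_neq0 {K n p E M v}.

Theorem theorem11p5 (K : fieldType) (d : nat) (A As : 'M[K]_d.+1)
    (E Es : 'I_d.+1 -> 'M[K]_d.+1) (th : 'I_d.+1 -> K)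
    (u : 'cV[K]_d.+1) (B : 'M[K]_d.+1) :
  leonard_system A As E Es ->
  eigen_seq_for A E th ->
  u != 0 -> E ord0 *m u = u ->
  A *m std_basis_mx Es u = std_basis_mx Es u *m B ->
  \prod_(i < d) (th ord0 - th (lift ord0 i))
    = ls_nu E Es * \prod_(i < d) B (lift ord0 i) (widen_ord (leqnSn d) i).
Proof.
move=> [_ _ [ths hths] triEAs triEsA] hth unz E0u hAP.
have IE := eigen_idem hth; have IEs := eigen_idem hths.
have vnz := std_nonzero IE IEs triEAs E0u unz.
have [Eorth Eidem Esum AE [EA Erank]] := IE.
have [Esorth Esidem Essum AsEs [EsAs Esrank]] := IEs.
pose v j := Es j *m u.
have Esv : forall i j, Es i *m v j = if i == j then v j else 0.
  move=> i j; rewrite /v mulmxA; case: eqVneq => [->|nij]; first by rewrite Esidem.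
  by rewrite Esorth ?mul0mx.
have v0nz : forall j, E j *m v ord0 != 0.
  by apply: (std_nonzero IEs IE triEsA) => //; apply: vnz.
pose t := \tr (E ord0 *m Es ord0).
have E0v0 : E ord0 *m v ord0 = t *: u.
  by rewrite /v -{1}E0u !mulmxA rank1_sandwich // -scalemxAl E0u.
have tnz : t != 0.
  by apply: contraNneq (v0nz ord0) => t0; rewrite E0v0 t0 scale0r.
have colP : forall j, col j (std_basis_mx Es u) = v j.
  by move=> j; apply/matrixP => a b; rewrite !mxE (ord1 b).
have hcol : forall j, A *m v j = \sum_l B l j *: v l.
  move=> j; rewrite -colP colE mulmxA hAP -mulmxA -colE; apply/matrixP => a b.
  rewrite summxE !mxE; apply: eq_bigr => l _.
  by rewrite !mxE (ord1 b) mulrC.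
have hES : forall i j, Es i *m A *m v j = B i j *: v i.
  move=> i j; rewrite -mulmxA hcol mulmx_sumr (bigD1 i) //= big1 ?addr0.
    by rewrite -scalemxAr Esv eqxx.
  by move=> l nli; rewrite -scalemxAr Esv eq_sym (negbTE nli) scaler0.
have expand : forall (M : 'M[K]_d.+1) (x : 'cV[K]_d.+1),
    M *m x = \sum_l M *m Es l *m x.
  move=> M x; rewrite -{1}[x]mul1mx -Essum mulmx_suml mulmx_sumr.
  by apply: eq_bigr => l _; rewrite mulmxA.
pose q k := \prod_(i < k) ('X - (th (inord i.+1))%:P).
pose x k := horner_mx A (q k) *m v ord0.
pose cB k := \prod_(i < k) B (inord i.+1) (inord i).
have C : forall k, (k < d.+1)%N ->
    (forall m : 'I_d.+1, (k < m)%N -> Es m *m x k = 0) /\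
    Es (inord k) *m x k = cB k *: v (inord k).
  elim=> [_|k IH hk].
    have i0 : (inord 0 : 'I_d.+1) = ord0 by apply: val_inj; rewrite /= inordK.
    rewrite /x /q /cB !big_ord0 rmorph1 mul1mx i0 scale1r Esv eqxx; split => // m hm.
    by rewrite Esv; case: eqVneq hm => // ->.
  have [IH1 IH2] := IH (ltnW hk).
  set c := th (inord k.+1).
  have xS : x k.+1 = A *m x k - c *: x k.
    rewrite /x /q big_ord_recr /= mulrC rmorphM rmorphB /= horner_mx_X horner_mx_C.
    by rewrite -mulmxE -mulmxA mulmxBl mul_scalar_mx.
  have zterm : forall m l : 'I_d.+1, (l.+1 < m)%N || (k < l)%N ->
      Es m *m A *m Es l *m x k = 0.
    move=> m l /orP [hlm|hkl].
      by have [h _] := triEsA m l; rewrite h ?mul0mx //; right.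
    by rewrite -mulmxA IH1 ?mulmx0.
  split.
    move=> m hm; rewrite xS mulmxBr -scalemxAr IH1 ?scaler0 ?subr0; last by apply: ltn_trans hm.
    rewrite mulmxA expand big1 // => l _; apply: zterm.
    by case: (ltnP k l) => hkl; rewrite ?orbT // orbF; apply: leq_ltn_trans hm.
  have hkm : (k < (inord k.+1 : 'I_d.+1))%N by rewrite inordK.
  rewrite xS mulmxBr -scalemxAr IH1 // scaler0 subr0.
  rewrite mulmxA expand (bigD1 (inord k)) //= big1 ?addr0.
    rewrite -mulmxA IH2 -scalemxAr hES scalerA /cB big_ord_recr /=; congr (_ *: _).
  move=> l hl; apply: zterm; case: (ltnP k l) => hkl; rewrite ?orbT // orbF.
  rewrite inordK //; rewrite ltnS ltn_neqAle hkl andbT.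
  by apply: contra hl => /eqP hlk; apply/eqP/val_inj; rewrite /= inordK // -hlk.
have [_ Cd] := C d (ltnSn d).
set P0 := \prod_(i < d) (th ord0 - th (lift ord0 i)).
have liftE : forall i : 'I_d, (inord i.+1 : 'I_d.+1) = lift ord0 i.
  by move=> i; apply: val_inj; rewrite /= inordK // ltnS ltn_ord.
have P0nz : P0 != 0.
  apply/prodf_neq0 => i _; rewrite subr_eq0; apply/eqP => h.
  by have := hth; case=> thinj _ _; move/thinj: h => /eqP; rewrite (negbTE (neq_lift _ _)).
have Lag0 : Lag th ord0 = P0^-1 *: q d.
  rewrite /Lag big_mkcond big_ord_recl /= mul1r.
  rewrite scaler_prod prodfV /q; congr (_ *: _); apply: eq_bigr => i _.
  by rewrite liftE.
have hq : horner_mx A (q d) = P0 *: E ord0.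
  have [_ _ hE] := hth.
  rewrite hE prim_idem_horner Lag0 -mul_polyC rmorphM /= horner_mx_C [_ * _]mul_scalar_mx.
  by rewrite scalerA mulfV // scale1r.
have dE : (inord d : 'I_d.+1) = ord_max by apply: val_inj; rewrite /= inordK.
move: Cd; rewrite /x hq -scalemxAl E0v0 scalerA -scalemxAr dE => Cd.
have key : P0 * t = cB d.
  apply/eqP; rewrite -subr_eq0; apply/eqP.
  have : (P0 * t - cB d) *: v ord_max = 0.
    by rewrite scalerBl -Cd /v subrr.
  by move/eqP; rewrite scaler_eq0 (negbTE (vnz _)) orbF => /eqP.
have hcB : cB d = \prod_(i < d) B (lift ord0 i) (widen_ord (leqnSn d) i).
  apply: eq_bigr => i _; rewrite liftE; congr (B _ _).
  by apply: val_inj; rewrite /= inordK // ltnS ltnW.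
rewrite /ls_nu -/t -hcB -key mulrC mulfK //.
Qed.
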